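(* For every $\delta<\frac{1}{2e^4}$, every $T>0$ and every $\Delta>0$, there exists an ergodic MDP $\mathcal{M}$ with $S=3$ states, $A=2$ actions and optimal bias span $H=1/2$ such that any algorithm that computes a $\Delta$-tight upper bound for the optimal bias span with probability $1-\delta$, using a generative model, uses in expectation more than $T$ samples when run on $\mathcal{M}$.
   Context: A (finite) MDP is a tuple $(\mathcal{S},\mathcal{A},P,r)$ with $|\mathcal{S}|=S$, $|\mathcal{A}|=A$, transition kernel $P$ (with $p_{s,a}$ the distribution of the next state from $(s,a)$) and reward distributions $r(s,a)$ supported in $[0,1]$ with mean $\bar r_{s,a}$. An MDP is ergodic if for every stationary deterministic policy and every pair of states $s,s'$ the expected hitting time of $s'$ from $s$ is finite. For a stationary policy $\pi$, the gain is $g_\pi(s)=\lim_{T\to\infty}\frac1T\mathbb{E}_\pi[\sum_{t=0}^{T-1}r_t\mid s_0=s]$. In such an MDP the optimal gain $g^\star$ is a constant and there is a vector $b^\star\in\mathbb{R}^S$ (unique up to an additive constant) with $g^\star+b^\star(s)=\max_a\{\bar r_{s,a}+p_{s,a}b^\star\}$ for all $s$, namely the bias vector $b_\pi=\sum_{t\ge1}(P_\pi^{t-1}-\bar P_\pi)\bar r_\pi$ of the optimal policy, where $\bar P_\pi=\lim_T\frac1T\sum_{t=1}^TP_\pi^{t-1}$. The optimal bias span is $H=\max_s b^\star(s)-\min_s b^\star(s)$. A generative model allows the algorithm, at each step, to choose any pair $(s,a)$ and observe an independent reward sample $r\sim r(s,a)$ and next state $s'\sim p_{s,a}$; the number of samples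 is the number of such queries before the algorithm stops. An algorithm computes a $\Delta$-tight upper bound for the optimal bias span with probability $1-\delta$ if, on every MDP with optimal bias span $H$, it outputs $\hat H$ with $\mathbb{P}(H\le\hat H\le H+\Delta)\ge1-\delta$. *)

(* Defs.v *)
From mathcomp Require Import all_boot all_order all_algebra.
From mathcomp Require Import all_classical all_reals all_analysis.
Set Implicit Arguments.
Unset Strict Implicit.
Unset Printing Implicit Defensive.
Import Order.TTheory GRing.Theory Num.Theory.
Local Open Scope classical_set_scope.
Local Open Scope ring_scope.

(* Reward distributions are finitely supported distributions on [0,1], *)
(* given as lists of (value, weight) pairs.   *)

Record mdp (R : realType) (S A : nat) := MDP {
  trans : 'I_S -> 'I_A -> 'I_S -> R;
  rew   : 'I_S -> 'I_A -> seq (R * R)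
}.

Section MDPDefs.
Variables (R : realType) (S A : nat).
Implicit Types (M : mdp R S A).

Definition rew_prob M (s : 'I_S) (a : 'I_A) (x : R) : R :=
  \sum_(p <- rew M s a | p.1 == x) p.2.

Definition mean_rew M (s : 'I_S) (a : 'I_A) : R :=
  \sum_(p <- rew M s a) p.1 * p.2.

Definition valid_mdp M : Prop :=
  (forall s a s', 0 <= trans M s a s') /\
  (forall s a, \sum_(s' < S) trans M s a s' = 1) /\
  (forall s a p, p \in rew M s a -> 0 <= p.1 <= 1 /\ 0 <= p.2) /\
  (forall s a, \sum_(p <- rew M s a) p.2 = 1).

Fixpoint avoid_prob M (pi : 'I_S -> 'I_A) (s' : 'I_S) (t : nat) (x : 'I_S) : R :=
  match t with
  | 0 => (x != s')%:R
  | t.+1 => (x != s')%:R * \sum_(y < S) trans M x (pi x) y * avoid_prob M pi s' t y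
  end.

(* expected hitting time of s' from s under pi: E[tau] = sum_t P(tau > t),
   tau = min {t >= 0 | X_t = s'} *)
Definition exp_hitting_time M (pi : 'I_S -> 'I_A) (s s' : 'I_S) : \bar R :=
  \esum_(t in [set: nat]) (avoid_prob M pi s' t s)%:E.

Definition ergodic M : Prop :=
  forall (pi : 'I_S -> 'I_A) (s s' : 'I_S), (exp_hitting_time M pi s s' < +oo)%E.

Definition bellman_solution M (g : R) (b : 'I_S -> R) : Prop :=
  forall s : 'I_S,
    (forall a : 'I_A, mean_rew M s a + \sum_(s' < S) trans M s a s' * b s' <= g + b s) /\
    (exists a : 'I_A, mean_rew M s a + \sum_(s' < S) trans M s a s' * b s' = g + b s).

Definition is_span (b : 'I_S -> R) (H : R) : Prop :=
  (forall s t : 'I_S, b s - b t <= H) /\ (exists s t : 'I_S, b s - b t = H).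

Definition opt_bias_span M (H : R) : Prop :=
  exists (g : R) (b : 'I_S -> R), bellman_solution M g b /\ is_span b H.

(* A step of the interaction: query (s,a), observation (reward, s').   *)
(* A (randomized, behavioural) algorithm maps the history so far to a  *)
(* distribution over decisions: None = stop, Some (s,a) = query (s,a); *)
(* when it stops it outputs Hhat drawn from a probability law on R     *)
(* that may depend on the history.                                     *)

Definition step := (('I_S * 'I_A) * (R * 'I_S))%type.
Definition history := seq step.

Record algorithm := Algorithm {
  decide : history -> option ('I_S * 'I_A) -> R;
  output : history -> probability R R
}.

Definition valid_algorithm (alg : algorithm) : Prop :=
  (forall h d, 0 <= decide alg h d) /\
  (forall h, decide alg h None + \sum_(q : 'I_S * 'I_A) decide alg h (Some q) = 1).

Definition obs_prob M (q : 'I_S * 'I_A) (o : R * 'I_S) : R :=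
  rew_prob M q.1 q.2 o.1 * trans M q.1 q.2 o.2.

(* probability that the run of alg on M performs at least size h queries and
   its first size h steps are exactly h; rh is the history in reverse order *)
Fixpoint reach_rev (alg : algorithm) M (rh : history) : R :=
  match rh with
  | [::] => 1
  | x :: rh' => reach_rev alg M rh' * decide alg (rev rh') (Some x.1) * obs_prob M x.1 x.2
  end.

Definition reach (alg : algorithm) M (h : history) : R := reach_rev alg M (rev h).

(* expected number of samples E[N] = sum_{n >= 1} P(N >= n) *)
Definition expected_samples (alg : algorithm) M : \bar R :=
  \esum_(h in [set h : history | h != [::]]) (reach alg M h)%:E.

Definition prob_tight (alg : algorithm) M (H Delta : R) : \bar R :=
  \esum_(h in [set: history])
    ((reach alg M h * decide alg h None)%:E * output alg h `[H, (H + Delta)%R]%classic)%E.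

Definition tight_bias_bound (alg : algorithm) (Delta delta : R) : Prop :=
  forall M, valid_mdp M -> ergodic M ->
  forall H, opt_bias_span M H -> ((1 - delta)%:E <= prob_tight alg M H Delta)%E.

End MDPDefs.

(* Main.v *)
Require Import Defs.
From mathcomp Require Import all_boot all_order all_algebra.
From mathcomp Require Import all_classical all_reals all_analysis.
From mathcomp Require Import ring lra.
Import Order.TTheory GRing.Theory Num.Theory.
Local Open Scope classical_set_scope.
Local Open Scope ring_scope.

Section Gen.
Variable R : realType.

Lemma esum_le_fin (T : choiceType) (S : set T) (f : T -> R) (c : R) :
  (forall X : set T, finite_set X -> X `<=` S -> \sum_(x <- finmap.enum_fset (fset_set X)) f x <= c) ->
  (\esum_(x in S) (f x)%:E <= c%:E)%E.
Proof.
move=> H; apply: ge_ereal_sup => _ [X [finX XS] <-].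
by rewrite fsbig_finite//= sumEFin lee_fin; apply: H.
Qed.

Lemma esum_subset (T : choiceType) (A B : set T) (f : T -> \bar R) :
  A `<=` B -> (\esum_(x in A) f x <= \esum_(x in B) f x)%E.
Proof.
move=> AB; apply: ge_ereal_sup => _ [X [fX XA] <-]; apply: ereal_sup_ubound.
by exists X => //; split => //; apply: subset_trans XA AB.
Qed.

Lemma sum_sub_uniq (T : eqType) (U V : seq T) (f : T -> R) :
  uniq U -> uniq V -> {subset U <= V} -> (forall x, 0 <= f x) ->
  \sum_(x <- U) f x <= \sum_(x <- V) f x.
Proof.
move=> uU uV UV f0.
have pV : perm_eq ([seq x <- V | mem U x] ++ [seq x <- V | predC (mem U) x]) V.
  by apply/permPl; exact: perm_filterC.
rewrite -(perm_big _ pV) big_cat /=.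
have -> : \sum_(x <- [seq x <- V | mem U x]) f x = \sum_(x <- U) f x.
  apply: perm_big; apply: uniq_perm => //; first exact: filter_uniq.
  move=> x; rewrite mem_filter /=; case xU: (x \in U) => //=.
  by rewrite UV.
by rewrite lerDl sumr_ge0.
Qed.

Lemma esum_fin_le (T : finType) (f : T -> R) : (forall x, 0 <= f x) ->
  (\esum_(x in [set: T]) (f x)%:E <= (\sum_x f x)%:E)%E.
Proof.
move=> f0; apply: esum_le_fin => X _ _.
rewrite [X in _ <= X](_ : _ = \sum_(x <- enum T) f x); last by rewrite big_enum.
apply: sum_sub_uniq => //.
- exact: enum_uniq.
- by move=> x _; rewrite mem_enum.
Qed.

Lemma esumZ_le (T : choiceType) (S : set T) (c : R) (f : T -> \bar R) :
  0 <= c -> (forall x, (0 <= f x)%E) ->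
  (\esum_(x in S) (c%:E * f x) <= c%:E * \esum_(x in S) f x)%E.
Proof.
move=> c0 f0; apply: ge_ereal_sup => _ [X [finX XS] <-].
rewrite fsbig_finite//= -ge0_sume_distrr//; apply: lee_wpmul2l; first by rewrite lee_fin.
rewrite -fsbig_finite//; apply: ereal_sup_ubound; by exists X.
Qed.

Lemma finite_size_bound (T : choiceType) (X : set (seq T)) : finite_set X ->
  exists n, forall h, X h -> (size h <= n)%N.
Proof.
move=> /finite_fsetP[F ->]; exists (\max_(h <- finmap.enum_fset F) size h) => h /= hF.
by apply: (@leq_bigmax_seq _ _ xpredT).
Qed.

End Gen.
Section Hist.
Variables (R : realType) (S A : nat) (alg : algorithm R S A) (M : mdp R S A).
Local Notation hist := (history R S A).
Local Notation stp := (step R S A).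

Definition Ext (p : hist) n := [set h : hist | exists s, (size s <= n)%N /\ h = p ++ s].
Definition Ext' (p : hist) n :=
  [set h : hist | exists x s, (size s < n)%N /\ h = rcons p x ++ s].

Lemma esum_Ext (F : hist -> \bar R) p n : (forall h, Ext p n h -> (0 <= F h)%E) ->
  \esum_(h in Ext p n) F h = (F p + \esum_(h in Ext' p n) F h)%E.
Proof.
move=> F0; rewrite (esumID [set p]) //.
have -> : Ext p n `&` [set p] = [set p].
  apply/seteqP; split => h /=; first by case=> _ ->.
  by move=> ->; split => //; exists [::]; rewrite cats0.
have -> : Ext p n `&` ~` [set p] = Ext' p n.
  apply/seteqP; split => h /=.
    case=> -[[|x s] [hs ->]] /= hp; first by rewrite cats0 in hp.
    by exists x, s; split => //; rewrite cat_rcons.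
  case=> x [s [hs ->]]; split.
    by exists (x :: s); split => //; rewrite cat_rcons.
  rewrite cat_rcons => /(congr1 size); rewrite size_cat /= => /eqP.
  by rewrite -{2}(addn0 (size p)) eqn_add2l.
rewrite esum_set1 //; apply: F0; exists [::]; by rewrite cats0.
Qed.

Lemma esum_Ext' (F : hist -> \bar R) p n : (forall h, Ext' p n.+1 h -> (0 <= F h)%E) ->
  \esum_(h in Ext' p n.+1) F h =
  \esum_(x in [set: stp]) \esum_(h in Ext (rcons p x) n) F h.
Proof.
move=> F0; rewrite esum_esum; last first.
  move=> x h _ [s [hs ->]]; apply: F0; by exists x, s.
rewrite (reindex_esum ([set: stp] `*`` (fun x => Ext (rcons p x) n)) (Ext' p n.+1) snd) //.
split.
- move=> [x h] [_ [s [hs ->]]] /=; by exists x, s.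
- move=> [x1 h1] [x2 h2]; rewrite !inE => -[_ [s1 [_ /= E1]]] [_ [s2 [_ /= E2]]] /= e.
  move: (e); rewrite E1 E2 !cat_rcons => /eqP; rewrite eqseq_cat // => /andP[_ /eqP [ex es]].
  by rewrite ex es.
- move=> h [x [s [hs ->]]]; exists (x, rcons p x ++ s) => //; split => //; by exists s.
Qed.

Lemma reach_rcons p x : reach alg M (rcons p x) =
  reach alg M p * decide alg p (Some x.1) * obs_prob M x.1 x.2.
Proof. by rewrite /reach rev_rcons /= revK. Qed.

Lemma reach_nil : reach alg M [::] = 1.
Proof. by []. Qed.

Hypothesis dec0 : forall h d, 0 <= decide alg h d.
Hypothesis dec1 : forall h, decide alg h None + \sum_(q : 'I_S * 'I_A) decide alg h (Some q) = 1.
Hypothesis obs0 : forall q o, 0 <= obs_prob M q o.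
Hypothesis obs1 : forall q, (\esum_(o in [set: R * 'I_S]) (obs_prob M q o)%:E <= 1)%E.

Lemma reach_ge0 h : 0 <= reach alg M h.
Proof.
elim/last_ind: h => [|p x IH]; first by rewrite reach_nil.
by rewrite reach_rcons; apply: mulr_ge0; [apply: mulr_ge0|]; rewrite ?IH ?dec0 ?obs0.
Qed.

Lemma step_sum (c : 'I_S * 'I_A -> R) : (forall q, 0 <= c q) ->
  (\esum_(x in [set: stp]) (c x.1 * obs_prob M x.1 x.2)%:E <= (\sum_q c q)%:E)%E.
Proof.
move=> c0.
have -> : [set: stp] = [set: 'I_S * 'I_A] `*`` (fun _ => [set: R * 'I_S]).
  by apply/seteqP; split => // -[q o] _.
rewrite -(@esum_esum _ _ _ setT (fun _ => setT) (fun q o => (c q * obs_prob M q o)%:E)) /=;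
  last by move=> q o _ _; rewrite lee_fin mulr_ge0.
apply: (@le_trans _ _ (\esum_(q in [set: 'I_S * 'I_A]) (c q)%:E)); last exact: esum_fin_le.
apply: le_esum => q _.
under eq_esum do rewrite EFinM.
apply: le_trans (@esumZ_le R _ setT (c q) (fun o => (obs_prob M q o)%:E) (c0 q) _) _.
  by move=> o; rewrite lee_fin.
by rewrite -[X in (_ <= X)%E]mule1; apply: lee_wpmul2l; rewrite ?lee_fin.
Qed.

Lemma dec_none_le1 h : decide alg h None <= 1.
Proof. by rewrite -(dec1 h) lerDl sumr_ge0. Qed.

Lemma step_reach p :
  (\esum_(x in [set: stp]) (reach alg M (rcons p x))%:E <=
   (reach alg M p * (1 - decide alg p None))%:E)%E.
Proof.
under eq_esum do rewrite reach_rcons -mulrA EFinM.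
apply: le_trans (@esumZ_le R _ setT (reach alg M p)
  (fun x => (decide alg p (Some x.1) * obs_prob M x.1 x.2)%:E) (reach_ge0 p) _) _.
  by move=> x; rewrite lee_fin mulr_ge0.
rewrite EFinM; apply: lee_wpmul2l; first by rewrite lee_fin reach_ge0.
have -> : 1 - decide alg p None = \sum_q decide alg p (Some q).
  by rewrite -(dec1 p) addrAC subrr add0r.
exact: (step_sum (fun q => decide alg p (Some q))).
Qed.

Definition Dst h := reach alg M h * decide alg h None.

Lemma Dst_ge0 h : 0 <= Dst h.
Proof. by rewrite mulr_ge0 // reach_ge0. Qed.

Lemma Ext'0 p : Ext' p 0 = set0.
Proof. by apply/seteqP; split => h // [x [s []]]. Qed.

Lemma L_Ext n p : (\esum_(h in Ext p n) (Dst h)%:E <= (reach alg M p)%:E)%E.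
Proof.
elim: n p => [|n IH] p.
  rewrite esum_Ext; last by move=> h _; rewrite lee_fin Dst_ge0.
  rewrite Ext'0 esum_set0 adde0 lee_fin /Dst.
  by rewrite ler_piMr ?reach_ge0 ?dec_none_le1.
rewrite esum_Ext; last by move=> h _; rewrite lee_fin Dst_ge0.
rewrite esum_Ext'; last by move=> h _; rewrite lee_fin Dst_ge0.
apply: le_trans (leeD (lexx _) (le_esum (fun x _ => IH (rcons p x)))) _.
apply: le_trans (leeD (lexx _) (step_reach p)) _.
by rewrite -EFinD lee_fin /Dst mulrBr mulr1 addrC subrK.
Qed.

Lemma W_Ext n p : (\esum_(h in Ext p n) ((((size h)%:R - (size p)%:R) * Dst h))%:E <=
  \esum_(h in Ext' p n) (reach alg M h)%:E)%E.
Proof.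
have w0 q m h : Ext q m h -> 0 <= ((size h)%:R - (size q)%:R) * Dst h.
  move=> [s [_ ->]]; rewrite size_cat natrD addrAC subrr add0r.
  by rewrite mulr_ge0 ?Dst_ge0.
elim: n p => [|n IH] p.
  rewrite esum_Ext; last by move=> h /w0; rewrite lee_fin.
  rewrite Ext'0 esum_set0 adde0 subrr mul0r; exact: esum_ge0.
rewrite esum_Ext; last by move=> h /w0; rewrite lee_fin.
rewrite esum_Ext'; last by move=> h [x [s [hs ->]]]; apply/w0; exists (x :: s); rewrite cat_rcons.
rewrite subrr mul0r add0e esum_Ext'; last by move=> h _; rewrite lee_fin reach_ge0.
apply: le_esum => x _.
rewrite (esum_Ext (fun h => (reach alg M h)%:E)); last by move=> h _; rewrite lee_fin reach_ge0.
have e : forall h, Ext (rcons p x) n h ->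
   ((((size h)%:R - (size p)%:R) * Dst h)%:E =
   (((size h)%:R - (size (rcons p x))%:R) * Dst h)%:E + (Dst h)%:E)%E.
  move=> h _; rewrite -EFinD size_rcons -addn1 natrD; congr (_%:E).
  by rewrite opprD addrA [in RHS]mulrBl mul1r subrK.
rewrite (eq_esum e) esumD; first last.
- by move=> h _; rewrite lee_fin Dst_ge0.
- by move=> h /w0; rewrite lee_fin.
by rewrite addeC; apply: leeD; [apply: L_Ext | apply: IH].
Qed.

Lemma Ext_all (f : hist -> \bar R) (c : \bar R) :
  (forall n, (\esum_(h in Ext [::] n) f h <= c)%E) ->
  (\esum_(h in [set: hist]) f h <= c)%E.
Proof.
move=> H; apply: ge_ereal_sup => _ [X [finX _] <-].
have [n Hn] := finite_size_bound _ _ finX.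
apply: le_trans _ (H n); apply: ereal_sup_ubound; exists X => //; split => //.
by move=> h Xh; exists h; split => //; apply: Hn.
Qed.

Lemma totalD : (\esum_(h in [set: hist]) (Dst h)%:E <= 1)%E.
Proof. by apply: Ext_all => n; have := L_Ext n [::]; rewrite reach_nil. Qed.

Lemma totalW : (\esum_(h in [set: hist]) ((size h)%:R * Dst h)%:E <=
  \esum_(h in [set h : hist | h != [::]]) (reach alg M h)%:E)%E.
Proof.
apply: Ext_all => n.
have e : \esum_(h in Ext [::] n) (((size h)%:R - (size ([::] : hist))%:R) * Dst h)%:E =
  \esum_(h in Ext [::] n) ((size h)%:R * Dst h)%:E.
  by apply: eq_esum => h _; rewrite /= mulr0n subr0.
rewrite -e; apply: le_trans (W_Ext n [::]) _.
by apply: esum_subset => h [x [s [_ ->]]] /=.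
Qed.

End Hist.
Arguments Dst {R S A}.
Arguments reach_ge0 {R S A alg M}.
Arguments totalD {R S A alg M}.
Arguments totalW {R S A alg M}.
Section Valid.
Variables (R : realType) (S A : nat) (M : mdp R S A).
Hypothesis VM : valid_mdp M.

Lemma rew_prob_ge0 s a v : 0 <= rew_prob M s a v.
Proof.
case: VM => _ [_ [Hr _]].
rewrite /rew_prob big_seq_cond sumr_ge0 // => p /andP[pin _].
by have [_ ] := Hr s a p pin.
Qed.

Lemma obs_prob_ge0 q o : 0 <= obs_prob M q o.
Proof. case: VM => H0 _; by rewrite /obs_prob mulr_ge0 ?rew_prob_ge0. Qed.

Lemma rew_sum_uniq s a (U : seq R) : uniq U -> \sum_(v <- U) rew_prob M s a v <= 1.
Proof.
case: VM => _ [_ [Hr Hs]] uU.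
rewrite /rew_prob.
under eq_bigr do rewrite big_mkcond.
rewrite exchange_big /= -(Hs s a) big_seq [X in _ <= X]big_seq.
apply: ler_sum => p pin; rewrite -big_mkcond /=.
have p2 : 0 <= p.2 by have [_ ] := Hr s a p pin.
case: (boolP (p.1 \in U)) => pU.
  have ef : [seq v <- U | p.1 == v] = [:: p.1].
    rewrite -(filter_pred1_uniq uU pU); apply: eq_filter => v /=; by rewrite eq_sym.
  by rewrite -big_filter ef big_seq1.
rewrite big1_seq // => v /andP[/eqP e vU].
by move: pU; rewrite e vU.
Qed.

Lemma obs_prob_le1 q : (\esum_(o in [set: R * 'I_S]) (obs_prob M q o)%:E <= 1)%E.
Proof.
have -> : [set: R * 'I_S] = [set: R] `*`` (fun _ => [set: 'I_S]).
  by apply/seteqP; split => // -[v s'] _.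
rewrite /obs_prob -(@esum_esum _ _ _ setT (fun _ => setT)
  (fun v s' => (rew_prob M q.1 q.2 v * trans M q.1 q.2 s')%:E)) /=; last first.
  by move=> v s' _ _; rewrite lee_fin mulr_ge0 ?rew_prob_ge0 //; case: VM.
apply: (@le_trans _ _ (\esum_(v in [set: R]) (rew_prob M q.1 q.2 v)%:E)).
  apply: le_esum => v _.
  under eq_esum do rewrite EFinM.
  apply: le_trans (@esumZ_le R _ setT (rew_prob M q.1 q.2 v)
     (fun s' => (trans M q.1 q.2 s')%:E) (rew_prob_ge0 _ _ _) _) _.
    by move=> s'; rewrite lee_fin; case: VM.
  rewrite -[X in (_ <= X)%E]mule1; apply: lee_wpmul2l; first by rewrite lee_fin rew_prob_ge0.
  have t0 : forall s', 0 <= trans M q.1 q.2 s' by move=> s'; case: VM.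
  apply: le_trans (@esum_fin_le R _ (fun s' => trans M q.1 q.2 s') t0) _.
  by case: VM => _ [-> _].
apply: esum_le_fin => X _ _; apply: rew_sum_uniq; exact: finmap.fset_uniq.
Qed.

Lemma geo_sum (eta : R) N : 0 < eta ->
  \sum_(t < N) (1 - eta) ^+ t = (1 - (1 - eta) ^+ N) / eta.
Proof.
move=> e0; elim: N => [|N IH]; first by rewrite big_ord0 expr0 subrr mul0r.
rewrite big_ord_recr /= IH exprSr.
by field; rewrite gt_eqF.
Qed.

Lemma geo_esum (eta : R) : 0 < eta <= 1 ->
  (\esum_(t in [set: nat]) ((1 - eta) ^+ t)%:E <= (eta^-1)%:E)%E.
Proof.
move=> /andP[e0 e1]; apply: esum_le_fin => X _ _.
set U := finmap.enum_fset _.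
have c0 : 0 <= 1 - eta by rewrite subr_ge0.
apply: (@le_trans _ _ (\sum_(t <- iota 0 (\max_(t <- U) t).+1) (1 - eta) ^+ t)).
  apply: sum_sub_uniq => //.
  - exact: finmap.fset_uniq.
  - exact: iota_uniq.
  - move=> t tU; rewrite mem_iota /= add0n ltnS.
    exact: (@leq_bigmax_seq _ _ xpredT).
  - by move=> t; rewrite exprn_ge0.
rewrite -{1}(subn0 (\max_(t <- U) t).+1) -/(index_iota 0 _) big_mkord geo_sum //.
rewrite ler_pdivrMr // mulVf ?gt_eqF // gerBl exprn_ge0 //.
Qed.

Lemma ergodic_of_min (eta : R) : 0 < eta -> (forall s a s', eta <= trans M s a s') -> ergodic M.
Proof.
move=> e0 Hmin pi s s'.
case: VM => Ht0 [Ht1 _].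
have e1 : eta <= 1.
  have Hs := Ht1 s (pi s); apply: le_trans (Hmin s (pi s) s) _.
  by rewrite -Hs (bigD1 s) //= lerDl sumr_ge0.
have c0 : 0 <= 1 - eta by rewrite subr_ge0.
have avoid0 t : avoid_prob M pi s' t s' = 0.
  by case: t => [|t] /=; rewrite eqxx ?mul0r.
have avb t x : 0 <= avoid_prob M pi s' t x <= (1 - eta) ^+ t.
  elim: t x => [|t IH] x /=.
    by case: (x != s'); rewrite ?mulr1n ?mulr0n ?expr0 ?lexx ?ler01.
  set sm := \sum_(y < S) _.
  have sm0 : 0 <= sm by rewrite sumr_ge0 // => y _; rewrite mulr_ge0 ?Ht0 //; case/andP: (IH y).
  have smle : sm <= (1 - eta) ^+ t.+1.
    rewrite /sm (bigD1 s') //= avoid0 mulr0 add0r.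
    apply: (@le_trans _ _ (\sum_(y < S | y != s') trans M x (pi x) y * (1 - eta) ^+ t)).
      apply: ler_sum => y _; apply: ler_wpM2l; first exact: Ht0.
      by case/andP: (IH y).
    rewrite -mulr_suml exprSr mulrC ler_wpM2l ?exprn_ge0 //.
    have := Ht1 x (pi x); rewrite (bigD1 s') //= => H.
    have := Hmin x (pi x) s'; lra.
  by case: (x != s'); rewrite ?mulr1n ?mulr0n ?mul1r ?mul0r ?sm0 ?smle ?lexx ?exprn_ge0.
rewrite /exp_hitting_time.
apply: le_lt_trans (ltry (eta^-1)).
apply: (@le_trans _ _ (\esum_(t in [set: nat]) ((1 - eta) ^+ t)%:E)); last first.
  by apply: geo_esum; rewrite e0 e1.
apply: le_esum => t _; rewrite lee_fin; by case/andP: (avb t s).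
Qed.

End Valid.
Section Concrete.
Variable R : realType.

Definition trn (eta : R) : 'I_3 -> 'I_2 -> 'I_3 -> R :=
  fun s _ s' => if s == s' then 1 - 2 * eta else eta.
Definition rwd (a e : R) : 'I_3 -> 'I_2 -> seq (R * R) :=
  fun s _ => if s == ord0 then [:: (a, 1 - e); (1, e)] else [:: (0, 1)].
Definition Mk (eta a e : R) : mdp R 3 2 := MDP (trn eta) (rwd a e).

Lemma sum3 (f : 'I_3 -> R) : \sum_(i < 3) f i = f ord0 + f (inord 1) + f (inord 2).
Proof.
rewrite !big_ord_recr big_ord0 /=. rewrite add0r; congr (_ + _ + _); congr f; apply/val_inj => //=.
by rewrite inordK.
by rewrite inordK.
Qed.

Lemma ord3P (s : 'I_3) : s = ord0 \/ s = inord 1 \/ s = inord 2.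
Proof.
case: s => [[|[|[|//]]] Hs].
- by left; apply/val_inj.
- by right; left; apply/val_inj; rewrite /= inordK.
- by right; right; apply/val_inj; rewrite /= inordK.
Qed.

Lemma neq01 : (ord0 : 'I_3) == inord 1 = false. Proof. by rewrite -val_eqE /= inordK. Qed.
Lemma neq02 : (ord0 : 'I_3) == inord 2 = false. Proof. by rewrite -val_eqE /= inordK. Qed.
Lemma neq12 : (inord 1 : 'I_3) == inord 2 = false. Proof. by rewrite -val_eqE /= !inordK. Qed.
Lemma neq10 : (inord 1 : 'I_3) == ord0 = false. Proof. by rewrite eq_sym neq01. Qed.
Lemma neq20 : (inord 2 : 'I_3) == ord0 = false. Proof. by rewrite eq_sym neq02. Qed.
Lemma neq21 : (inord 2 : 'I_3) == inord 1 = false. Proof. by rewrite eq_sym neq12. Qed.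

Definition neqs := (neq01, neq02, neq12, neq10, neq20, neq21, eqxx).

Lemma trn_sum eta s a : \sum_(s' < 3) trn eta s a s' = 1.
Proof.
rewrite sum3 /trn; case: (ord3P s) => [->|[->|->]]; rewrite !neqs; ring.
Qed.

Variables (eta a e : R).
Hypotheses (eta0 : 0 < eta) (eta3 : 3 * eta <= 1) (a0 : 0 <= a) (a1 : a <= 1)
  (e0 : 0 <= e) (e1 : e <= 1).

Ltac lra' := move: (eta0) (eta3) (a0) (a1) (e0) (e1) => ? ? ? ? ? ?; lra.

Lemma trn_min s x s' : eta <= trn eta s x s'.
Proof. rewrite /trn; case: ifP => _; lra'. Qed.

Lemma Mk_valid : valid_mdp (Mk eta a e).
Proof.
split; [|split; [|split]].
- move=> s x s'; apply: le_trans (trn_min s x s'); lra'.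
- by move=> s x; apply: trn_sum.
- move=> s x p /=; rewrite /rwd; case: ifP => _; rewrite !inE.
    by case/orP => /eqP ->; rewrite /=; lra'.
  by move=> /eqP -> /=; lra'.
- move=> s x /=; rewrite /rwd; case: ifP => _; rewrite !big_cons big_nil /=; lra'.
Qed.

Definition r0 := a * (1 - e) + e.

Lemma mean_Mk s x : mean_rew (Mk eta a e) s x = if s == ord0 then r0 else 0.
Proof.
rewrite /mean_rew /= /rwd; case: ifP => _; rewrite !big_cons big_nil /= /r0; lra'.
Qed.

Lemma Mk_span : opt_bias_span (Mk eta a e) (r0 / (3 * eta)).
Proof.
have r00 : 0 <= r0 by rewrite /r0 addr_ge0 // mulr_ge0 // subr_ge0.
pose b : 'I_3 -> R := fun s => if s == ord0 then 2 * r0 / (9 * eta) else - (r0 / (9 * eta)).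
have eq s x : mean_rew (Mk eta a e) s x + \sum_(s' < 3) trans (Mk eta a e) s x s' * b s' =
   r0 / 3 + b s.
  rewrite mean_Mk sum3 /= /trn /b; case: (ord3P s) => [->|[->|->]]; rewrite !neqs;
  field; rewrite gt_eqF //.
exists (r0 / 3), b; split.
  move=> s; split; first by move=> x; rewrite eq.
  by exists ord0; rewrite eq.
have H : 2 * r0 / (9 * eta) - - (r0 / (9 * eta)) = r0 / (3 * eta).
  by field; rewrite gt_eqF.
have Hp : 0 <= r0 / (3 * eta) by rewrite divr_ge0 // mulr_ge0 // ltW.
split.
  move=> s t; rewrite /b; case: ifP => _; case: ifP => _; rewrite ?subrr //.
    by rewrite H.
  rewrite -H; lra'.
exists ord0, (inord 1); rewrite /b !neqs; exact: H.
Qed.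

Lemma rew_cmp s x v :
  (1 - e) * rew_prob (Mk eta a 0) s x v <= rew_prob (Mk eta a e) s x v.
Proof.
rewrite /rew_prob /= /rwd; case: ifP => _; rewrite !big_cons !big_nil /=;
  (repeat case: ifP => _); lra'.
Qed.

Lemma obs_cmp q o :
  (1 - e) * obs_prob (Mk eta a 0) q o <= obs_prob (Mk eta a e) q o.
Proof.
rewrite /obs_prob mulrA; apply: ler_wpM2r; last exact: rew_cmp.
apply: le_trans (trn_min q.1 q.2 o.2); lra'.
Qed.

End Concrete.
Lemma bern (R : realType) (e : R) n : 0 <= e -> e <= 1 -> 1 - n%:R * e <= (1 - e) ^+ n.
Proof.
move=> e0 e1; elim: n => [|n IH]; first by rewrite mul0r subr0 expr0.
rewrite exprSr -addn1 natrD.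
have c0 : 0 <= 1 - e by rewrite subr_ge0.
have := ler_wpM2r c0 IH.
have n0 : 0 <= (n%:R : R) by rewrite ler0n.
nra.
Qed.

Lemma aux_ineq (R : realType) (x y z o : R) :
  x <= y + z -> 0 <= x -> 0 <= z -> 0 <= o -> o <= 1 -> x * o <= y * o + z.
Proof. move=> *; nra. Qed.

Section Cmp.
Variables (R : realType) (S A : nat) (alg : algorithm R S A) (M M' : mdp R S A) (e : R).
Hypotheses (e0 : 0 <= e) (e1 : e <= 1).
Hypothesis dec0 : forall h d, 0 <= decide alg h d.
Hypothesis obs0 : forall q o, 0 <= obs_prob M q o.
Hypothesis obs0' : forall q o, 0 <= obs_prob M' q o.
Hypothesis cmp : forall q o, (1 - e) * obs_prob M q o <= obs_prob M' q o.

Lemma reach_cmp h : (1 - e) ^+ (size h) * reach alg M h <= reach alg M' h.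
Proof.
elim/last_ind: h => [|p x IH]; first by rewrite expr0 mul1r.
rewrite !reach_rcons size_rcons exprSr.
have r0 := reach_ge0 dec0 obs0 p.
have c0 : 0 <= 1 - e by rewrite subr_ge0.
have -> : (1 - e) ^+ size p * (1 - e) * (reach alg M p * decide alg p (Some x.1) * obs_prob M x.1 x.2)
  = ((1 - e) ^+ size p * reach alg M p) * decide alg p (Some x.1) * ((1 - e) * obs_prob M x.1 x.2).
  by ring.
apply: ler_pM; last exact: cmp.
- by rewrite mulr_ge0 // mulr_ge0 // exprn_ge0.
- by rewrite mulr_ge0.
- by apply: ler_pM => //; rewrite mulr_ge0 // exprn_ge0.
Qed.

Lemma Dst_cmp h : Dst alg M h <= Dst alg M' h + e * ((size h)%:R * Dst alg M h).
Proof.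
have r0 := reach_ge0 dec0 obs0 h.
have hb := @bern _ e (size h) e0 e1.
have h1 := ler_wpM2r r0 hb.
have h2 := reach_cmp h.
have hr : reach alg M h <= reach alg M' h + e * ((size h)%:R * reach alg M h) by nra.
rewrite /Dst.
have := ler_wpM2r (dec0 h None) hr.
move=> H; apply: le_trans H _; rewrite le_eqVlt; apply/orP; left; apply/eqP; ring.
Qed.

End Cmp.

Lemma prob_facts (R : realType) (m : probability R R) (I J : set R) :
  measurable I -> measurable J -> I `&` J = set0 ->
  [/\ m I = (fine (m I))%:E, m J = (fine (m J))%:E, (0 <= fine (m I))%R,
      (0 <= fine (m J))%R & (fine (m I) + fine (m J) <= 1)%R].
Proof.
move=> mI mJ IJ.
have fI : m I \is a fin_num.
  by rewrite ge0_fin_numE ?measure_ge0 // (le_lt_trans (probability_le1 _ mI)) ?ltry.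
have fJ : m J \is a fin_num.
  by rewrite ge0_fin_numE ?measure_ge0 // (le_lt_trans (probability_le1 _ mJ)) ?ltry.
split; rewrite ?fineK ?fine_ge0 ?measure_ge0 //.
rewrite -lee_fin EFinD !fineK // -measureU //.
by apply: probability_le1; apply: measurableU.
Qed.
Theorem mainTheorem1 (R : realType) (delta T Delta : R) :
  delta < (2 * expR 4)^-1 -> 0 < T -> 0 < Delta ->
  exists M : mdp R 3 2,
    [/\ valid_mdp M, ergodic M, opt_bias_span M (1 / 2) &
      forall alg : algorithm R 3 2,
        valid_algorithm alg -> tight_bias_bound alg Delta delta ->
        (T%:E < expected_samples alg M)%E].
Proof.
move=> hd hT hD.
set eps := (2 * (T + 1))^-1.
set eta := eps / (12 * Delta + 4).
set a := 3 * eta / 2.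
have hTp : 0 < 2 * (T + 1) by rewrite mulr_gt0 // ltr_wpDl // ltW.
have hDp : 0 < 12 * Delta + 4 by rewrite ltr_wpDl // mulr_ge0 // ltW.
have eps0 : 0 < eps by rewrite invr_gt0.
have epsE : eps * (2 * (T + 1)) = 1 by rewrite mulVf // gt_eqF.
have etaE : eta * (12 * Delta + 4) = eps by rewrite /eta mulrVK ?unitfE ?gt_eqF.
have eta0 : 0 < eta by rewrite divr_gt0.
have aE : 2 * a = 3 * eta by rewrite /a mulrC mulrVK ?unitfE ?pnatr_eq0.
have eps1 : eps <= 1 / 2 by nra.
have eta8 : 8 * eta <= 1 by nra.
have eta3 : 3 * eta <= 1 by nra.
have a0 : 0 <= a by nra.
have a1 : a <= 1 by nra.
have a4 : 4 * a <= 1 by nra.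
have e0 : 0 <= (0 : R) by [].
have e1 : (0 : R) <= 1 by [].
have epsp : 0 <= eps by exact: ltW.
have eps1' : eps <= 1 by nra.
have V0 := @Mk_valid R _ _ _ eta0 eta3 a0 a1 e0 e1.
have V1 := @Mk_valid R _ _ _ eta0 eta3 a0 a1 epsp eps1'.
have E0 := @ergodic_of_min _ _ _ _ V0 eta eta0 (@trn_min R _ _ _ eta0 eta3 a0 a1 e0 e1).
have E1 := @ergodic_of_min _ _ _ _ V1 eta eta0 (@trn_min R _ _ _ eta0 eta3 a0 a1 epsp eps1').
have S0 : opt_bias_span (Mk R eta a 0) (1 / 2).
  have := @Mk_span R _ _ _ eta0 eta3 a0 a1 e0 e1.
  have -> : r0 R a 0 / (3 * eta) = 1 / 2.
    have ap : 0 < a by nra.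
    by rewrite /r0 subr0 mulr1 addr0 -aE; field; rewrite gt_eqF.
  by [].
set Hp := r0 R a eps / (3 * eta).
have S1 : opt_bias_span (Mk R eta a eps) Hp := @Mk_span R _ _ _ eta0 eta3 a0 a1 epsp eps1'.
have HpE : Hp * (3 * eta) = a * (1 - eps) + eps.
  by rewrite /Hp /r0 mulrVK // unitfE mulf_neq0 // gt_eqF.
have Hpgt : 1 / 2 + Delta < Hp.
  have : 3 * eta * (1 / 2 + Delta) < 3 * eta * Hp by nra.
  by rewrite ltr_pM2l // mulr_gt0.
exists (Mk R eta a 0); split => // alg [dec0 dec1] Htb.
rewrite ltNge; apply/negP => HN.
set M := Mk R eta a 0.
set M' := Mk R eta a eps.
set I1 := `[1 / 2, 1 / 2 + Delta]%classic.
set I2 := `[Hp, Hp + Delta]%classic.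
have mI1 : measurable I1 by exact: measurable_itv.
have mI2 : measurable I2 by exact: measurable_itv.
have I12 : I1 `&` I2 = set0.
  apply/seteqP; split => // x []; rewrite /I1 /I2 /= !in_itv /= => /andP[_ x1] /andP[x2 _].
  have : Hp <= 1 / 2 + Delta by apply: le_trans x2 x1.
  by rewrite leNgt Hpgt.
pose o1 h := fine (output alg h I1).
pose o2 h := fine (output alg h I2).
have PF h := @prob_facts _ (output alg h) I1 I2 mI1 mI2 I12.
have hA := Htb M V0 E0 (1 / 2) S0.
have hB := Htb M' V1 E1 Hp S1.
have obs0 := @obs_prob_ge0 _ _ _ _ V0.
have obs1 := @obs_prob_le1 _ _ _ _ V0.
have obs0' := @obs_prob_ge0 _ _ _ _ V1.
have obs1' := @obs_prob_le1 _ _ _ _ V1.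
have D0 h : 0 <= Dst alg M h by rewrite /Dst mulr_ge0 ?dec0 // reach_ge0.
have D0' h : 0 <= Dst alg M' h by rewrite /Dst mulr_ge0 ?dec0 // reach_ge0.
have eA : prob_tight alg M (1 / 2) Delta = \esum_(h in [set: history R 3 2]) (Dst alg M h * o1 h)%:E.
  apply: eq_esum => h _; case: (PF h) => -> _ _ _ _; by rewrite EFinM.
have eB : prob_tight alg M' Hp Delta = \esum_(h in [set: history R 3 2]) (Dst alg M' h * o2 h)%:E.
  apply: eq_esum => h _; case: (PF h) => _ -> _ _ _; by rewrite EFinM.
rewrite eA in hA; rewrite eB in hB.
set X := \esum_(h in [set: history R 3 2]) (Dst alg M' h * o1 h)%:E.
set Y := \esum_(h in [set: history R 3 2]) (Dst alg M' h * o2 h)%:E.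
set Z := \esum_(h in [set: history R 3 2]) (eps * ((size h)%:R * Dst alg M h))%:E.
have step1 : (\esum_(h in [set: history R 3 2]) (Dst alg M h * o1 h)%:E <= X + Z)%E.
  rewrite /X /Z -esumD; first last.
  - by move=> h _; rewrite lee_fin mulr_ge0 // mulr_ge0 // ler0n.
  - by move=> h _; case: (PF h) => _ _ ? _ _; rewrite lee_fin mulr_ge0.
  apply: le_esum => h _; rewrite -EFinD lee_fin.
  case: (PF h) => _ _ p1 p2 p12.
  apply: aux_ineq => //.
  - exact: (@Dst_cmp _ _ _ alg M M' eps epsp eps1' dec0 obs0 (@obs_cmp R _ _ _ eta0 eta3 a0 a1 epsp eps1')).
  - by rewrite mulr_ge0 // mulr_ge0 // ler0n.
  - rewrite /o1; nra.
have step2 : (Z <= eps%:E * T%:E)%E.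
  rewrite /Z; under eq_esum do rewrite EFinM.
  apply: le_trans (@esumZ_le R _ setT eps _ epsp _) _.
    by move=> h; rewrite lee_fin mulr_ge0 // ler0n.
  apply: lee_wpmul2l; first by rewrite lee_fin.
  apply: le_trans HN.
  exact: (totalW dec0 dec1 obs0 obs1).
have step3 : (X + Y <= 1)%E.
  rewrite /X /Y -esumD; first last.
  - by move=> h _; case: (PF h) => _ _ _ ? _; rewrite lee_fin mulr_ge0.
  - by move=> h _; case: (PF h) => _ _ ? _ _; rewrite lee_fin mulr_ge0.
  apply: le_trans (totalD dec0 dec1 obs0' obs1').
  apply: le_esum => h _; rewrite -EFinD lee_fin -mulrDr.
  case: (PF h) => _ _ p1 p2 p12.
  by rewrite ler_piMr.
have fin : ((1 - delta)%:E + (1 - delta)%:E <= 1 + eps%:E * T%:E)%E.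
  apply: le_trans (leeD (le_trans hA step1) hB) _.
  rewrite addeAC; exact: leeD.
move: fin; rewrite -EFinD -EFinM -EFinD lee_fin.
have hexp : 5 <= expR 4 :> R.
  have := expR_ge1Dx (4 : R); lra.
set v := (2 * expR 4)^-1 in hd.
have vE : v * (2 * expR 4) = 1 by rewrite mulVf // gt_eqF // mulr_gt0 // expR_gt0.
have v0 : 0 < v by rewrite invr_gt0 mulr_gt0 // expR_gt0.
have hd' : delta < 1 / 4 by nra.
have epsT : eps * T < 1 / 2 by nra.
lra.
Qed.
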